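(* Let $(S_n)_{n\ge0}$ be defined by $S_0=3$, $S_1=1$, $S_2=3$ and $S_{n+1}=S_n+S_{n-1}+S_{n-2}$ for $n\ge 2$. Let $\alpha,\beta,\gamma$ be the roots of $x^3-x^2-x-1=0$ and $C_n=\alpha^n\beta^n+\alpha^n\gamma^n+\beta^n\gamma^n$ for $n\ge0$. Then for all $n\ge 0$, $$2S_n=C_n^2-C_{2n}.$$
   Context: $S_n$ is the generalized Lucas (generalized Tribonacci) sequence. *)

(* Defs.v *)
From mathcomp Require Import all_boot all_order all_algebra all_field.
From mathcomp Require Import zify.
Set Implicit Arguments. Unset Strict Implicit. Unset Printing Implicit Defensive.
Import Order.TTheory GRing.Theory Num.Theory.

(* S_triple n = (S_n, S_(n+1), S_(n+2)) *)
Fixpoint S_triple (n : nat) : nat * nat * nat :=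
  match n with
  | 0 => (3, 1, 3)
  | m.+1 => let: (x, y, z) := S_triple m in (y, z, x + y + z)
  end.

Definition S_seq (n : nat) : nat := (S_triple n).1.1.

Lemma S_seq0 : S_seq 0 = 3. Proof. by []. Qed.
Lemma S_seq1 : S_seq 1 = 1. Proof. by []. Qed.
Lemma S_seq2 : S_seq 2 = 3. Proof. by []. Qed.
Lemma S_seqS (n : nat) : S_seq n.+3 = S_seq n.+2 + S_seq n.+1 + S_seq n.
Proof.
rewrite /S_seq /=; case: (S_triple n) => [[x y] z] /=.
by lia.
Qed.

Local Open Scope ring_scope.

Definition C_seq (R : ringType) (a b c : R) (n : nat) : R :=
  a ^+ n * b ^+ n + a ^+ n * c ^+ n + b ^+ n * c ^+ n.

(* Main.v *)
Require Import Defs.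
From mathcomp Require Import all_boot all_order all_algebra all_field.
From mathcomp Require Import ring.
Import GRing.Theory Num.Theory.
Local Open Scope ring_scope.

Lemma use3 {R : comPzRingType} {x y u1 v1 u2 v2 u3 v3 k1 k2 k3 : R} :
  u1 = v1 -> u2 = v2 -> u3 = v3 ->
  x - y = k1 * (u1 - v1) + k2 * (u2 - v2) + k3 * (u3 - v3) -> x = y.
Proof.
move=> -> -> ->; rewrite !subrr !mulr0 !addr0 => /eqP; rewrite subr_eq0 => /eqP //.
Qed.

Theorem mainTheorem10 (a b c : algC) :
  'X^3 - 'X^2 - 'X - 1 = ('X - a%:P) * ('X - b%:P) * ('X - c%:P) ->
  forall n : nat, 2 * (S_seq n)%:R = C_seq a b c n ^+ 2 - C_seq a b c (2 * n)%N.
Proof.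
move=> H n.
have H0 := congr1 (fun p => p.[0]) H.
have H1 := congr1 (fun p => p.[1]) H.
have H2 := congr1 (fun p => p.[-1]) H.
have Ha := congr1 (fun p => p.[a]) H.
have Hb := congr1 (fun p => p.[b]) H.
have Hc := congr1 (fun p => p.[c]) H.
move: H0 H1 H2 Ha Hb Hc; rewrite /= !hornerE !subrr !(mul0r, mulr0) => H0 H1 H2 Ha Hb Hc.
have {}H0 : (0:algC) ^+ 3 - 0 ^+ 2 - 0 - 1 = - a * - b * - c := H0.
have {}H1 : (1:algC) ^+ 3 - 1 ^+ 2 - 1 - 1 = (1 - a) * (1 - b) * (1 - c) := H1.
have {}H2 : (-1:algC) ^+ 3 - (-1) ^+ 2 - -1 - 1 = (-1 - a) * (-1 - b) * (-1 - c) := H2.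
have {}Ha : a ^+ 3 - a ^+ 2 - a - 1 = 0 := Ha.
have {}Hb : b ^+ 3 - b ^+ 2 - b - 1 = 0 := Hb.
have {}Hc : c ^+ 3 - c ^+ 2 - c - 1 = 0 := Hc.
have e3 : a * b * c = 1.
  by apply: (use3 (k1:=1) (k2:=0) (k3:=0) H0 H0 H0); ring.
have two0 : (2 : algC) != 0 by rewrite pnatr_eq0.
have e1 : a + b + c = 1.
  apply: (mulfI two0); apply: (use3 (k1:=1) (k2:=1) (k3:=-2) H1 H2 e3); ring.
have e2 : a * b + b * c + c * a = -1.
  apply: (mulfI two0); apply: (use3 (k1:=-1) (k2:=1) (k3:=0) H1 H2 e3); ring.
have ra : forall k, a ^+ k.+3 = a ^+ k.+2 + a ^+ k.+1 + a ^+ k.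
  by move=> k; apply: (use3 (k1:=a ^+ k) (k2:=0) (k3:=0) Ha Ha Ha); rewrite !exprS; ring.
have rb : forall k, b ^+ k.+3 = b ^+ k.+2 + b ^+ k.+1 + b ^+ k.
  by move=> k; apply: (use3 (k1:=b ^+ k) (k2:=0) (k3:=0) Hb Hb Hb); rewrite !exprS; ring.
have rc : forall k, c ^+ k.+3 = c ^+ k.+2 + c ^+ k.+1 + c ^+ k.
  by move=> k; apply: (use3 (k1:=c ^+ k) (k2:=0) (k3:=0) Hc Hc Hc); rewrite !exprS; ring.
pose p k := a ^+ k + b ^+ k + c ^+ k.
have P : forall k, [/\ p k = (S_seq k)%:R, p k.+1 = (S_seq k.+1)%:R & p k.+2 = (S_seq k.+2)%:R].
  elim=> [|k [IH0 IH1 IH2]].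
    split; rewrite /p /= ?expr0 ?expr1.
      by rewrite S_seq0; ring.
      by rewrite S_seq1 e1.
    rewrite S_seq2; have -> : a ^+ 2 + b ^+ 2 + c ^+ 2 = (a + b + c) ^+ 2 - 2 * (a * b + b * c + c * a) by ring.
      by rewrite e1 e2; ring.
  split => //.
  by rewrite S_seqS !natrD -IH0 -IH1 -IH2 /p ra rb rc; ring.
have [Pn _ _] := P n.
have en : a ^+ n * b ^+ n * c ^+ n = 1 by rewrite -!exprMn e3 expr1n.
rewrite -Pn /p /C_seq mulnC !exprM.
apply: (use3 (k1:=-2 * (a ^+ n + b ^+ n + c ^+ n)) (k2:=0) (k3:=0) en en en); ring.
Qed.
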